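(* Let $G_i=(V_i,E_i)$ be a simple graph of maximum degree $\Delta_i$ and minimum degree $\delta_i$, $i\in\{1,2\}$, and let $S\subseteq V_1\times V_2$. Then: (i) If for some $i\in\{1,2\}$ and integer $k_i$, $P_{V_i}(S)$ is a $k_i$-paf set in $G_i$, then for every integer $k\in\{k_i+\Delta_j,\dots,\Delta_i+\Delta_j-2\}$, $S$ is a $k$-paf set in $G_1\times G_2$, where $j\in\{1,2\}$, $j\neq i$. (ii) If for integers $k_1,k_2$, $P_{V_1}(S)$ is a $k_1$-paf set in $G_1$ and $P_{V_2}(S)$ is a $k_2$-paf set in $G_2$, then for every integer $k\in\{k',\dots,\Delta_1+\Delta_2-2\}$, $S$ is a $k$-paf set in $G_1\times G_2$, where $k'=\max\{k_1+k_2-1,\;\min\{k_2-\delta_1,\,k_1-\delta_2\}\}$.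
   Context: All graphs are finite and simple. For a graph $G=(V,E)$, a set $S\subseteq V$ and $v\in V$, let $\delta_S(v)=|\{u\in S: uv\in E\}|$, $\overline{S}=V\setminus S$, and let $\partial S$ be the set of vertices of $\overline S$ adjacent to at least one vertex of $S$. For an integer $k$, a non-empty set $S\subseteq V$ is a defensive $k$-alliance if $\delta_S(v)\ge \delta_{\overline S}(v)+k$ for every $v\in S$; an offensive $k$-alliance if $\delta_S(v)\ge \delta_{\overline S}(v)+k$ for every $v\in\partial S$; and a powerful $k$-alliance if it is both a defensive $k$-alliance and an offensive $(k+2)$-alliance. A set $X\subseteq V$ is a powerful $k$-alliance free set ($k$-paf set) if no powerful $k$-alliance $S$ satisfies $S\subseteq X$. The Cartesian product $G_1\times G_2$ of $G_1=(V_1,E_1)$, $G_2=(V_2,E_2)$ has vertex set $V_1\times V_2$, with $(a,b)$ adjacent to $(c,d)$ iff either $a=c$ and $bd\in E_2$, or $b=d$ and $ac\in E_1$. For $A\subseteq V_1\times V_2$, $P_{V_i}(A)$ denotes the projection of $A$ onto $V_i$. *)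

(* Defs.v *)
From HB Require Import structures.
From mathcomp Require Import all_boot all_order all_algebra.
Set Implicit Arguments. Unset Strict Implicit. Unset Printing Implicit Defensive.
Import Order.TTheory GRing.Theory Num.Theory.

(* A simple graph is a symmetric irreflexive relation e on a finType T. *)
Section Alliances.
Variables (T : finType) (e : rel T).

Definition delta (S : {set T}) (v : T) : nat := #|[set u in S | e u v]|.

Definition deg (v : T) : nat := #|[set u | e u v]|.

(* maximum degree (0 for the empty graph) *)
Definition maxdeg : nat := \max_(v : T) deg v.
(* minimum degree (the identity #|T| is never reached for nonempty T,
   since deg v < #|T| for an irreflexive relation) *)
Definition mindeg : nat := \big[minn/#|T|]_(v : T) deg v.

Definition bdry (S : {set T}) : {set T} :=
  [set v in ~: S | [exists u in S, e u v]].

Definition defensive_alliance (k : int) (S : {set T}) : Prop :=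
  S != set0 /\
  forall v, v \in S -> ((delta (~: S) v)%:Z + k <= (delta S v)%:Z)%R.

Definition offensive_alliance (k : int) (S : {set T}) : Prop :=
  S != set0 /\
  forall v, v \in bdry S -> ((delta (~: S) v)%:Z + k <= (delta S v)%:Z)%R.

Definition powerful_alliance (k : int) (S : {set T}) : Prop :=
  defensive_alliance k S /\ offensive_alliance (k + 2)%R S.

Definition paf (k : int) (X : {set T}) : Prop :=
  forall S : {set T}, S \subset X -> ~ powerful_alliance k S.

End Alliances.

Definition cprod (T1 T2 : finType) (e1 : rel T1) (e2 : rel T2) : rel (T1 * T2) :=
  fun x y => ((x.1 == y.1) && e2 x.2 y.2) || ((x.2 == y.2) && e1 x.1 y.1).

(* Main.v *)
Require Import Defs.
From HB Require Import structures.
From mathcomp Require Import all_boot all_order all_algebra.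
From mathcomp Require Import zify.
Import Order.TTheory GRing.Theory Num.Theory.
Set Implicit Arguments. Unset Strict Implicit. Unset Printing Implicit Defensive.
Section G.
Variables (T : finType) (e : rel T).

Lemma delta_split (A : {set T}) v : delta e A v + delta e (~: A) v = deg e v.
Proof.
rewrite /delta /deg -(cardsID A [set u | e u v]); congr (_ + _); apply: eq_card => u;
by rewrite !inE andbC.
Qed.

Lemma deg_delta v : deg e v = delta e setT v.
Proof. by apply: eq_card => u; rewrite !inE. Qed.

Lemma delta_sub (A B : {set T}) v : A \subset B -> delta e A v <= delta e B v.
Proof.
move=> sAB; apply: subset_leq_card; apply/subsetP => u; rewrite !inE => /andP[uA ->].
by rewrite (subsetP sAB).
Qed.

Lemma delta_le_deg (A : {set T}) v : delta e A v <= deg e v.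
Proof. rewrite deg_delta; apply: delta_sub; exact: subsetT. Qed.

Lemma delta0 v : delta e set0 v = 0.
Proof. by apply/eqP; rewrite cards_eq0; apply/eqP/setP => u; rewrite !inE. Qed.

Lemma mindeg_le v : mindeg e <= deg e v.
Proof.
rewrite /mindeg; have : v \in index_enum T by rewrite mem_index_enum.
elim: (index_enum T) => [|x r IH] //; rewrite inE big_cons => /orP[/eqP<-|/IH h].
  exact: geq_minl.
exact: leq_trans (geq_minr _ _) h.
Qed.

Lemma maxdeg_ge v : deg e v <= maxdeg e.
Proof. exact: leq_bigmax. Qed.

End G.

Section P.
Variables (T1 T2 : finType) (e1 : rel T1) (e2 : rel T2).
Hypothesis irr2 : irreflexive e2.

Lemma in_pairl (a : T1) (B : {set T2}) (u : T1 * T2) :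
  (u \in [set (a, y) | y in B]) = (u.1 == a) && (u.2 \in B).
Proof.
case: u => x y /=; apply/imsetP/andP => [[y' Hy [-> ->]]|[/eqP -> Hy]] //.
by exists y.
Qed.

Lemma in_pairr (b : T2) (B : {set T1}) (u : T1 * T2) :
  (u \in [set (y, b) | y in B]) = (u.2 == b) && (u.1 \in B).
Proof.
case: u => x y /=; apply/imsetP/andP => [[y' Hy [-> ->]]|[/eqP -> Hy]] //.
by exists x.
Qed.

Lemma delta_cprod (A : {set T1 * T2}) a b :
  delta (cprod e1 e2) A (a, b) =
  delta e1 [set a' | (a', b) \in A] a + delta e2 [set b' | (a, b') \in A] b.
Proof.
rewrite /delta.
set B2 := [set b' in [set b' | (a, b') \in A] | e2 b' b].
set B1 := [set a' in [set a' | (a', b) \in A] | e1 a' a].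
have -> : [set u in A | cprod e1 e2 u (a, b)] =
   [set (a, y) | y in B2] :|: [set (y, b) | y in B1].
  apply/setP => -[x y]; rewrite !inE in_pairl in_pairr /cprod /= !inE.
  case: (eqVneq x a) => [->|xa] /=; case: (eqVneq y b) => [->|yb] //=.
  - by rewrite andb_orr.
  - by rewrite !orbF.
  - by rewrite andbF.
rewrite cardsU.
have -> : [set (a, y) | y in B2] :&: [set (y, b) | y in B1] = set0.
  apply/setP => -[x y]; rewrite !inE in_pairl in_pairr /= !inE.
  by case: (eqVneq y b) => [->|_]; rewrite ?irr2 ?andbF.
rewrite cards0 subn0 !card_imset 1?addnC //.
- by move=> x y [].
- by move=> x y [].
Qed.

Lemma deg_cprod a b : deg (cprod e1 e2) (a, b) = deg e1 a + deg e2 b.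
Proof.
rewrite !deg_delta delta_cprod; congr (_ + _); apply: eq_card => u; by rewrite !inE.
Qed.

End P.
Local Open Scope ring_scope.
Lemma cond_iff (T : finType) (e : rel T) (S : {set T}) v (k : int) :
  ((delta e (~: S) v)%:Z + k <= (delta e S v)%:Z) =
  ((deg e v)%:Z + k <= 2 * (delta e S v)%:Z).
Proof.
rewrite -(delta_split e S v) PoszD.
apply/idP/idP => h; lia.
Qed.

Section P.
Variables (T1 T2 : finType) (e1 : rel T1) (e2 : rel T2).
Hypothesis irr2 : irreflexive e2.

Lemma fibP (A : {set T1 * T2}) b : [set a' | (a', b) \in A] \subset [set x.1 | x in A].
Proof. by apply/subsetP => a'; rewrite inE => h; apply/imsetP; exists (a', b). Qed.

Lemma fibQ (A : {set T1 * T2}) a : [set b' | (a, b') \in A] \subset [set x.2 | x in A].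
Proof. by apply/subsetP => b'; rewrite inE => h; apply/imsetP; exists (a, b'). Qed.

Lemma projA (k1 k : int) (A : {set T1 * T2}) : powerful_alliance (cprod e1 e2) k A ->
  k1 + (maxdeg e2)%:Z <= k -> powerful_alliance e1 k1 [set x.1 | x in A].
Proof.
move=> [[nA dA] [_ oA]] hk.
have nP : [set x.1 | x in A] != set0.
  case/set0Pn: nA => x xA; apply/set0Pn; exists x.1; exact: imset_f.
split; split => //.
- move=> a /imsetP[[a0 b] xA /= ->].
  have := dA _ xA; rewrite !cond_iff (deg_cprod e1 irr2).
  rewrite (delta_cprod e1 irr2).
  have h1 := delta_sub e1 a0 (fibP A b).
  have h2 := delta_le_deg e2 [set b' | (a0, b') \in A] b.
  have h3 := maxdeg_ge e2 b.
  move=> h; set f1 := delta e1 [set a0 | (a0, b) \in A] _ in h1 h; set f2 := delta e2 [set b0 | (_, b0) \in A] b in h2 h. set d2 := deg e2 b in h2 h3 h; set M := maxdeg e2 in h3 hk; set P := delta e1 _ a0 in h1 *; lia.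
- move=> c; rewrite /bdry inE => /andP[aP /existsP[c' /andP[/imsetP[[a1 b] xA /= E] ea]]].
  subst a1.
  have xb : (c, b) \in bdry (cprod e1 e2) A.
    rewrite inE; apply/andP; split.
      rewrite inE; apply/negP => h; move: aP; rewrite inE => /negP; apply.
      by apply/imsetP; exists (c, b).
    by apply/existsP; exists (c', b); rewrite xA /cprod /= eqxx ea orbT.
  have := oA _ xb; rewrite !cond_iff (deg_cprod e1 irr2) (delta_cprod e1 irr2).
  have -> : [set b' | (c, b') \in A] = set0.
    apply/setP => b'; rewrite !inE; apply/negP => h; move: aP; rewrite inE => /negP; apply.
    by apply/imsetP; exists (c, b').
  rewrite delta0.
  have h1 := delta_sub e1 c (fibP A b).
  move=> h; set f1 := delta e1 [set a0 | (a0, b) \in A] _ in h1 h; set M := maxdeg e2 in hk; set P := delta e1 _ c in h1 *; lia.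
Qed.


Lemma fibA (k1 k : int) (A : {set T1 * T2}) a0 b0 :
  powerful_alliance (cprod e1 e2) k A -> (a0, b0) \in A ->
  2 * (delta e2 [set x.2 | x in A] b0)%:Z + k1 <= (deg e2 b0)%:Z + k ->
  powerful_alliance e1 k1 [set a' | (a', b0) \in A].
Proof.
move=> [[nA dA] [_ oA]] xA hb.
have nF : [set a' | (a', b0) \in A] != set0 by apply/set0Pn; exists a0; rewrite inE.
split; split => //.
- move=> a; rewrite inE => aA.
  have := dA _ aA; rewrite !cond_iff (deg_cprod e1 irr2) (delta_cprod e1 irr2).
  have h2 := delta_sub e2 b0 (fibQ A a).
  move=> h; set f1 := delta e1 [set a1 | (a1, b0) \in A] a in h *;
  set f2 := delta e2 [set b1 | (a, b1) \in A] b0 in h h2;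
  set Q := delta e2 _ b0 in h2 hb; set d2 := deg e2 b0 in h hb; lia.
- move=> c; rewrite /bdry inE => /andP[cF /existsP[c' /andP[c'F ec]]].
  rewrite !inE in cF c'F.
  have xb : (c, b0) \in bdry (cprod e1 e2) A.
    rewrite inE; apply/andP; split; first by rewrite inE.
    by apply/existsP; exists (c', b0); rewrite c'F /cprod /= eqxx ec orbT.
  have := oA _ xb; rewrite !cond_iff (deg_cprod e1 irr2) (delta_cprod e1 irr2).
  have h2 := delta_sub e2 b0 (fibQ A c).
  move=> h; set f1 := delta e1 [set a1 | (a1, b0) \in A] c in h *;
  set f2 := delta e2 [set b1 | (c, b1) \in A] b0 in h h2;
  set Q := delta e2 _ b0 in h2 hb; set d2 := deg e2 b0 in h hb; lia.
Qed.

Lemma offQ (k2 k : int) (A : {set T1 * T2}) :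
  powerful_alliance (cprod e1 e2) k A -> k2 <= k + (mindeg e1)%:Z ->
  offensive_alliance e2 (k2 + 2) [set x.2 | x in A].
Proof.
move=> [[nA dA] [_ oA]] hk.
split.
  case/set0Pn: nA => x xA; apply/set0Pn; exists x.2; exact: imset_f.
move=> c; rewrite /bdry inE => /andP[cP /existsP[c' /andP[/imsetP[[a c1] xA /= E] ec]]].
subst c1.
have xb : (a, c) \in bdry (cprod e1 e2) A.
  rewrite inE; apply/andP; split.
    rewrite inE; apply/negP => h; move: cP; rewrite inE => /negP; apply.
    by apply/imsetP; exists (a, c).
  by apply/existsP; exists (a, c'); rewrite xA /cprod /= eqxx ec.
have := oA _ xb; rewrite !cond_iff (deg_cprod e1 irr2) (delta_cprod e1 irr2).
have -> : [set a' | (a', c) \in A] = set0.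
  apply/setP => a'; rewrite !inE; apply/negP => h; move: cP; rewrite inE => /negP; apply.
  by apply/imsetP; exists (a', c).
rewrite delta0.
have h2 := delta_sub e2 c (fibQ A a).
have h3 := mindeg_le e1 a.
move=> h; set f2 := delta e2 [set b1 | (a, b1) \in A] c in h h2;
set Q := delta e2 _ c in h2 *; set d1 := deg e1 a in h h3; set m := mindeg e1 in h3 hk; lia.
Qed.

End P.
Section SW.
Variables (T1 T2 : finType) (e1 : rel T1) (e2 : rel T2).

Definition sw (x : T1 * T2) : T2 * T1 := (x.2, x.1).

Lemma sw_inj : injective sw.
Proof. by move=> [a b] [c d] [-> ->]. Qed.

Lemma mem_sw (B : {set T1 * T2}) x : (sw x \in sw @: B) = (x \in B).
Proof. exact: mem_imset sw_inj. Qed.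

Lemma swE (y : T2 * T1) : y = sw (y.2, y.1).
Proof. by case: y. Qed.

Lemma swC (B : {set T1 * T2}) : ~: (sw @: B) = sw @: (~: B).
Proof. by apply/setP => y; rewrite (swE y) inE !mem_sw inE. Qed.

Lemma cprod_sw u x : cprod e2 e1 (sw u) (sw x) = cprod e1 e2 u x.
Proof. by rewrite /cprod /= orbC. Qed.

Lemma delta_sw (B : {set T1 * T2}) x :
  delta (cprod e2 e1) (sw @: B) (sw x) = delta (cprod e1 e2) B x.
Proof.
rewrite /delta -(card_imset _ sw_inj); apply: eq_card => y.
by rewrite (swE y) mem_sw !inE mem_sw cprod_sw.
Qed.

Lemma bdry_sw (B : {set T1 * T2}) x :
  sw x \in bdry (cprod e2 e1) (sw @: B) -> x \in bdry (cprod e1 e2) B.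
Proof.
rewrite !inE mem_sw => /andP[xB /existsP[u /andP[/imsetP[z zB ->] ez]]].
rewrite xB /=; apply/existsP; exists z; by rewrite zB -cprod_sw.
Qed.

Lemma pa_sw (k : int) (B : {set T1 * T2}) :
  powerful_alliance (cprod e1 e2) k B -> powerful_alliance (cprod e2 e1) k (sw @: B).
Proof.
move=> [[nB dB] [_ oB]].
have nS : sw @: B != set0.
  case/set0Pn: nB => x xB; apply/set0Pn; exists (sw x); exact: imset_f.
split; split => //.
- move=> v /imsetP[x xB ->]; rewrite swC !delta_sw; exact: dB.
- move=> v; rewrite (swE v) => /bdry_sw h; rewrite swC !delta_sw; exact: oB.
Qed.

Lemma proj_sw (B : {set T1 * T2}) : [set x.1 | x in sw @: B] = [set x.2 | x in B].
Proof. by rewrite -imset_comp. Qed.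

End SW.

Lemma caseii (T1 T2 : finType) (e1 : rel T1) (e2 : rel T2) (irr2 : irreflexive e2)
  (S : {set T1 * T2}) (k1 k2 k : int) :
  paf e1 k1 [set x.1 | x in S] -> paf e2 k2 [set x.2 | x in S] ->
  k1 + k2 - 1 <= k -> k2 - (mindeg e1)%:Z <= k ->
  paf (cprod e1 e2) k S.
Proof.
move=> h1 h2 hk hm A sAS hA.
have hk' : k2 <= k + (mindeg e1)%:Z by lia.
have off := offQ irr2 hA hk'.
case: (boolP [forall b in [set x.2 | x in A],
    ((deg e2 b)%:Z + k2 <= 2 * (delta e2 [set x.2 | x in A] b)%:Z)]) => hQ.
  apply: (h2 [set x.2 | x in A]); first exact: imsetS.
  split => //; split; first by case: off.
  move=> b bQ; rewrite cond_iff; exact: (forall_inP hQ).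
move: hQ; rewrite negb_forall_in => /exists_inP[b0 /imsetP[[a0 b1] xA /= ->] hb].
have hb' : 2 * (delta e2 [set x.2 | x in A] b1)%:Z + k1 <= (deg e2 b1)%:Z + k.
  move: hb; set Q := delta e2 _ b1; set d := deg e2 b1; move=> hb; lia.
apply: (h1 _ _ (fibA irr2 hA xA hb')).
apply: subset_trans (fibP A b1) _; exact: imsetS.
Qed.

Theorem theorem5 (T1 T2 : finType) (e1 : rel T1) (e2 : rel T2)
  (sym1 : symmetric e1) (irr1 : irreflexive e1)
  (sym2 : symmetric e2) (irr2 : irreflexive e2)
  (S : {set T1 * T2}) :
  (* (i), case i = 1, j = 2 *)
  (forall k1 k : int, paf e1 k1 [set x.1 | x in S] ->
     (k1 + (maxdeg e2)%:Z <= k <= (maxdeg e1)%:Z + (maxdeg e2)%:Z - 2) ->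
     paf (cprod e1 e2) k S) /\
  (* (i), case i = 2, j = 1 *)
  (forall k2 k : int, paf e2 k2 [set x.2 | x in S] ->
     (k2 + (maxdeg e1)%:Z <= k <= (maxdeg e2)%:Z + (maxdeg e1)%:Z - 2) ->
     paf (cprod e1 e2) k S) /\
  (* (ii) *)
  (forall k1 k2 k : int,
     paf e1 k1 [set x.1 | x in S] -> paf e2 k2 [set x.2 | x in S] ->
     (Num.max (k1 + k2 - 1) (Num.min (k2 - (mindeg e1)%:Z) (k1 - (mindeg e2)%:Z)) <= k
       <= (maxdeg e1)%:Z + (maxdeg e2)%:Z - 2) ->
     paf (cprod e1 e2) k S).
Proof.
split; [|split].
- move=> k1 k h /andP[hk _] A sAS hA.
  apply: (h _ _ (projA irr2 hA hk)); exact: imsetS.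
- move=> k2 k h /andP[hk _] A sAS hA.
  have := projA irr1 (pa_sw hA) hk; rewrite proj_sw; apply: h; exact: imsetS.
- move=> k1 k2 k h1 h2 /andP[]; rewrite ge_max => /andP[hk]; rewrite ge_min => /orP[hm|hm] _.
    exact: (caseii irr2 h1 h2 hk hm).
  move=> A sAS hA.
  have hk' : k2 + k1 - 1 <= k by lia.
  have h1' : paf e2 k2 [set x.1 | x in (@sw T1 T2) @: S] by rewrite proj_sw.
  have h2' : paf e1 k1 [set x.2 | x in (@sw T1 T2) @: S].
    suff -> : [set x.2 | x in (@sw T1 T2) @: S] = [set x.1 | x in S] by [].
    by rewrite -imset_comp; apply: eq_imset => -[].
  apply: (caseii irr1 h1' h2' hk' hm (imsetS (@sw _ _) sAS) (pa_sw hA)).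
Qed.
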